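(* Let $n\geq1$, let $H$ be an irreducible subgroup of $SL(n,\mathbb{C})$ and let $u\in U_n(H)$. Then $\mathrm{Tr}(u)=0$ if $u\notin\langle \xi I_n\rangle$, and $\mathrm{Tr}(u)=n\xi^k$ if $u=\xi^kI_n$ with $k\in\mathbb{Z}/n$.
   Context: Let $\xi=e^{2\pi i/n}$; the center of $SL(n,\mathbb{C})$ is $\langle \xi I_n\rangle$. $\pi_n:SL(n,\mathbb{C})\to PSL(n,\mathbb{C})$ is the quotient map. A subgroup $H\le SL(n,\mathbb{C})$ is irreducible if no nonzero proper subspace of $\mathbb{C}^n$ is $H$-invariant. $U_n(H)=\{g\in SL(n,\mathbb{C}) : ghg^{-1}h^{-1}\in\langle\xi I_n\rangle \text{ for all } h\in H\}$, the preimage under $\pi_n$ of the centralizer of $\pi_n(H)$ in $PSL(n,\mathbb{C})$. *)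

(* Defs.v *)
(* The complex numbers are modelled by an arbitrary
   numClosedFieldType C (an algebraically closed field of characteristic 0,
   e.g. algC). *)
From HB Require Import structures.
From mathcomp Require Import all_boot all_order all_algebra.
Set Implicit Arguments. Unset Strict Implicit. Unset Printing Implicit Defensive.
Import Order.TTheory GRing.Theory Num.Theory.
Local Open Scope ring_scope.

Definition is_SL_subgroup (C : numClosedFieldType) (m : nat)
    (H : 'M[C]_m -> Prop) : Prop :=
  [/\ H 1%:M,
      (forall g h, H g -> H h -> H (g *m h)),
      (forall g, H g -> H (invmx g)) &
      (forall g, H g -> \det g = 1)].

Definition is_subspace (C : numClosedFieldType) (m : nat)
    (S : 'cV[C]_m -> Prop) : Prop :=
  [/\ S 0,
      (forall u v, S u -> S v -> S (u + v)) &
      (forall (a : C) v, S v -> S (a *: v))].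

Definition irreducible_mxgroup (C : numClosedFieldType) (m : nat)
    (H : 'M[C]_m -> Prop) : Prop :=
  forall S : 'cV[C]_m -> Prop, is_subspace S ->
    (forall h v, H h -> S v -> S (h *m v)) ->
    (forall v, S v -> v = 0) \/ (forall v, S v).

Definition U_set (C : numClosedFieldType) (m : nat) (xi : C)
    (H : 'M[C]_m -> Prop) (g : 'M[C]_m) : Prop :=
  \det g = 1 /\
  forall h, H h -> exists k : nat,
    g *m h *m invmx g *m invmx h = (xi ^+ k)%:M.

(* Main.v *)
Require Import Defs.
From HB Require Import structures.
From mathcomp Require Import all_boot all_order all_algebra.
From Stdlib Require Import Classical.
Import Order.TTheory GRing.Theory Num.Theory.
Local Open Scope ring_scope.

Theorem mainTheorem3 (C : numClosedFieldType) (n : nat) (xi : C)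
    (Hxi : (n.+1).-primitive_root xi)
    (H : 'M[C]_n.+1 -> Prop)
    (HSL : is_SL_subgroup H) (Hirr : irreducible_mxgroup H)
    (u : 'M[C]_n.+1) (Hu : U_set xi H u) :
  ((~ exists k : nat, u = (xi ^+ k)%:M) -> \tr u = 0) /\
  (forall k : nat, u = (xi ^+ k)%:M -> \tr u = (n.+1)%:R * xi ^+ k).
Proof.
case: HSL => H1 HM HV Hdet; case: Hu => detu Hcom.
have uU : u \in unitmx by rewrite unitmxE detu unitr1.
split; last first.
  by move=> k ->; rewrite mxtrace_scalar mulr_natl.
move=> Hns.
case: (classic (exists h, H h /\ u *m h *m invmx u *m invmx h != 1%:M)).
  move=> [h [Hh Hne]].
  have hU : h \in unitmx by rewrite unitmxE Hdet // unitr1.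
  have [k Hk] := Hcom h Hh.
  set c := xi ^+ k in Hk.
  have c1 : c != 1 by apply: contra Hne; rewrite Hk => /eqP ->.
  have E1 : u *m h *m invmx u = c *: h.
    by rewrite -mul_scalar_mx -Hk -!mulmxA mulVmx // mulmx1.
  have E2 : u *m h = c *: (h *m u).
    by rewrite scalemxAl -E1 -mulmxA mulVmx // mulmx1.
  have E3 : \tr u = c * \tr u.
    have T : \tr u = \tr (invmx h *m (u *m h)).
      by rewrite mxtrace_mulC -mulmxA mulmxV // mulmx1.
    by rewrite {1}T E2 -scalemxAr mulmxA (mulVmx hU) mul1mx mxtraceZ.
  have : (1 - c) * \tr u = 0 by rewrite mulrBl mul1r -E3 subrr.
  move/eqP; rewrite mulf_eq0 subr_eq0 eq_sym (negbTE c1) /=.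
  by move/eqP.
move=> Hall.
have comm : forall h, H h -> u *m h = h *m u.
  move=> h Hh.
  have hU : h \in unitmx by rewrite unitmxE Hdet // unitr1.
  have E : u *m h *m invmx u *m invmx h = 1%:M.
    apply/eqP; apply: NNPP => ne; apply: Hall; exists h; split => //; exact/negP.
  have := congr1 (fun M => M *m h *m u) E.
  by rewrite mul1mx -!mulmxA (mulKmx hU) (mulVmx uU) mulmx1.
have [a Ha] : exists a : C, root (char_poly u) a.
  by apply/closed_rootP; rewrite size_char_poly.
move: Ha; rewrite -eigenvalue_root_char => Ha.
have Hd : \det (a%:M - u) == 0.
  move/eigenvalueP: Ha => [v Av_av v_nz]; apply/det0P; exists v => //.
  by rewrite mulmxBr Av_av mul_mx_scalar subrr.
move: Hd; rewrite -det_tr => /det0P [w wn0 Hw0].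
have Hw : u *m w^T = a *: w^T.
  have := congr1 trmx Hw0; rewrite trmx_mul trmxK linear0 mulmxBl mul_scalar_mx.
  by move/eqP; rewrite subr_eq0 => /eqP <-.
pose S := fun v : 'cV[C]_n.+1 => u *m v = a *: v.
have Ssub : is_subspace S.
  split; rewrite /S.
  - by rewrite mulmx0 scaler0.
  - by move=> x y Hx Hy; rewrite mulmxDr Hx Hy scalerDr.
  - by move=> b x Hx; rewrite -scalemxAr Hx scalerA mulrC -scalerA.
have Sinv : forall h v, H h -> S v -> S (h *m v).
  by move=> h v Hh; rewrite /S => Hv; rewrite mulmxA comm // -mulmxA Hv scalemxAr.
have Sw : S w^T.
  exact: Hw.
case: (Hirr S Ssub Sinv) => [H0|Hfull].
  by move: wn0; rewrite -trmx_eq0 (H0 _ Sw) eqxx.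
have ua : u = a%:M.
  apply/matrixP=> i j.
  have := Hfull (delta_mx j 0); rewrite /S => /matrixP /(_ i 0).
  rewrite -colE !mxE => ->.
  by rewrite eqxx andbT mulr_natr.
exfalso; apply: Hns.
have : a ^+ n.+1 = 1 by rewrite -det_scalar -ua.
move/(prim_rootP Hxi) => [i Hi].
by exists i; rewrite ua Hi.
Qed.
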